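(* For every positive integer $N$ there exists a positive integer $m$ such that there are at least $N$ pairwise nonequivalent graphical Hadamard matrices of order $4^m$; that is, the number of nonequivalent graphical Hadamard matrices of order $4^m$ is unbounded as $m\to\infty$.
   Context: A Hadamard matrix of order $n$ is an $n\times n$ matrix $H$ with entries $\pm1$ such that $HH^{\top}=nI$. It is graphical if it is symmetric with constant diagonal. Two Hadamard matrices are equivalent if one can be obtained from the other by permuting rows, permuting columns, and multiplying rows and columns by $-1$. *)

(* Defs.v *)
From mathcomp Require Import all_boot all_order all_algebra all_fingroup.
Set Implicit Arguments. Unset Strict Implicit. Unset Printing Implicit Defensive.
Import GRing.Theory Num.Theory.
Local Open Scope ring_scope.

Definition hadamard (n : nat) (H : 'M[int]_n) : Prop :=
  (forall i j, H i j = 1 \/ H i j = -1) /\ H *m H^T = (n%:R : int)%:M.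

Definition graphical (n : nat) (H : 'M[int]_n) : Prop :=
  H^T = H /\ (forall i j : 'I_n, H i i = H j j).

Definition signed_perm_mx (n : nat) (P : 'M[int]_n) : Prop :=
  exists (d : 'I_n -> bool) (s : 'S_n),
    P = diag_mx (\row_i (if d i then -1 else 1)) *m perm_mx s.

Definition hadamard_equiv (n : nat) (H K : 'M[int]_n) : Prop :=
  exists P Q : 'M[int]_n, signed_perm_mx P /\ signed_perm_mx Q /\ K = P *m H *m Q.

(* Main.v *)
Require Import Defs.
From mathcomp Require Import all_boot all_order all_algebra all_fingroup.
From mathcomp Require Import ring.
From mathcomp Require Import zify.
Set Implicit Arguments. Unset Strict Implicit. Unset Printing Implicit Defensive.
Import GRing.Theory Num.Theory.
Local Open Scope ring_scope.

Section Gen.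
Variable T : finType.
Definition pr4 (F : T -> T -> int) (q : T * T * T * T) (y : T) : int :=
  F q.1.1.1 y * F q.1.1.2 y * F q.1.2 y * F q.2 y.
Definition condF F q := [forall y, forall y', pr4 F q y == pr4 F q y'].
Definition cntF F : nat := (\sum_(q : T * T * T * T) condF F q)%N.
End Gen.

Lemma cnt_transform (T' T : finType) (F : T -> T -> int) (d e : T' -> int)
  (s t : T' -> T) :
  (forall x, d x * d x = 1) -> (forall x, e x * e x = 1) ->
  bijective s -> bijective t ->
  cntF (fun i j => d i * e j * F (s i) (t j)) = cntF F.
Proof.
move=> dd ee [s' ss' s's] [t' tt' t't].
set K := fun i j => _.
have prK : forall q y, pr4 K q y =
   (d q.1.1.1 * d q.1.1.2 * d q.1.2 * d q.2) *
   pr4 F (s q.1.1.1, s q.1.1.2, s q.1.2, s q.2) (t y).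
  move=> q y; rewrite /pr4 /K /=.
  have e4 : e y * e y * (e y * e y) = 1 by rewrite ee mulr1.
  transitivity (d q.1.1.1 * d q.1.1.2 * d q.1.2 * d q.2 * (e y * e y * (e y * e y)) *
     (F (s q.1.1.1) (t y) * F (s q.1.1.2) (t y) * F (s q.1.2) (t y) * F (s q.2) (t y))).
    by ring.
  by rewrite e4 mulr1.
have condK : forall q, condF K q = condF F (s q.1.1.1, s q.1.1.2, s q.1.2, s q.2).
  move=> q; set D := (d q.1.1.1 * d q.1.1.2 * d q.1.2 * d q.2).
  have DD : D * D = 1.
    rewrite /D; transitivity ((d q.1.1.1 * d q.1.1.1) * (d q.1.1.2 * d q.1.1.2) *
       (d q.1.2 * d q.1.2) * (d q.2 * d q.2)); first by ring.
    by rewrite !dd !mulr1.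
  have Dinj : injective (fun x : int => D * x).
    move=> x y /= h; by rewrite -[x]mul1r -DD -mulrA h mulrA DD mul1r.
  apply/forallP/forallP => /= H.
    move=> z; apply/forallP => z'.
    have := forallP (H (t' z)) (t' z').
    by rewrite !prK !t't (inj_eq Dinj).
  move=> y; apply/forallP => y'.
  have := forallP (H (t y)) (t y').
  by rewrite !prK (inj_eq Dinj).
rewrite /cntF.
pose s4 := fun q : T' * T' * T' * T' => (s q.1.1.1, s q.1.1.2, s q.1.2, s q.2).
pose s4' := fun q : T * T * T * T => (s' q.1.1.1, s' q.1.1.2, s' q.1.2, s' q.2).
have b4 : bijective s4'.
  exists s4 => q; rewrite /s4 /s4' /=.
    by case: q => [[[a b] c] d'] /=; rewrite !s's.
  by case: q => [[[a b] c] d'] /=; rewrite !ss'.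
rewrite (reindex s4'); last by apply: onW_bij.
apply: eq_bigr => q _; rewrite condK.
by case: q => [[[a b] c] d'] /=; rewrite !s's.
Qed.
Lemma cntF_ext (T : finType) (F G : T -> T -> int) : F =2 G -> cntF F = cntF G.
Proof.
move=> FG; apply: eq_bigr => q _; rewrite /condF /pr4.
by congr (nat_of_bool _); apply: eq_forallb => y; apply: eq_forallb => y'; rewrite !FG.
Qed.

Definition cnt_mx n (H : 'M[int]_n) := cntF (fun i j : 'I_n => H i j).

Lemma PHQ_entries n (H : 'M[int]_n) dd de (s t : 'S_n) i j :
  (diag_mx (\row_i (if dd i then -1 else 1)) *m perm_mx s *m H *m
   (diag_mx (\row_i (if de i then -1 else 1)) *m perm_mx t)) i j =
  (if dd i then -1 else 1) * (if de ((t^-1)%g j) then -1 else 1) * H (s i) ((t^-1)%g j).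
Proof.
rewrite -(mulmxA (diag_mx _)) -row_permE mulmxA.
have -> : perm_mx t = perm_mx ((t^-1)^-1)%g by rewrite invgK.
rewrite -col_permE.
rewrite mxE mul_mx_diag mxE mul_diag_mx !mxE.
by rewrite mulrAC.
Qed.

Lemma sq_pm1 (b : bool) : (if b then -1 else 1) * (if b then -1 else 1) = 1 :> int.
Proof. by case: b; rewrite ?mulN1r ?opprK ?mul1r. Qed.

Lemma equiv_cnt n (H K : 'M[int]_n) : hadamard_equiv H K -> cnt_mx K = cnt_mx H.
Proof.
case=> P [Q [[dd [s ->]] [[de [t ->]] ->]]].
rewrite /cnt_mx (cntF_ext (G := fun i j => (if dd i then -1 else 1) *
   (if de ((t^-1)%g j) then -1 else 1) * H (s i) ((t^-1)%g j))); last first.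
  by move=> i j; rewrite PHQ_entries.
apply: (cnt_transform (fun i j => H i j) (d := fun i => if dd i then -1 else 1)
  (e := fun j => if de ((t^-1)%g j) then -1 else 1)).
- by move=> x; apply: sq_pm1.
- by move=> x; apply: sq_pm1.
- by exists (s^-1)%g => x; rewrite ?permK ?permKV.
- by exists t => x; rewrite ?permK ?permKV.
Qed.
Definition pmone (v : int) := (v == 1) || (v == -1).

Lemma pmoneM u v : pmone u -> pmone v -> pmone (u * v).
Proof.
by rewrite /pmone => /orP[]/eqP-> /orP[]/eqP->; rewrite ?mul1r ?mulN1r ?opprK ?eqxx ?orbT.
Qed.

Lemma pmone_neq0 v : pmone v -> v != 0.
Proof. by rewrite /pmone => /orP[]/eqP->. Qed.

Lemma prod_bool (I : finType) (b : I -> bool) :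
  (\prod_i (b i : nat))%N = [forall i, b i] :> nat.
Proof.
case: (boolP [forall i, b i]) => [/forallP H | /forallPn [i Hi]].
  by rewrite big1 // => i _; rewrite H.
by rewrite (bigD1 i) //= (negPf Hi).
Qed.

Section Prod.
Variables (G : finType) (m : nat) (A : 'I_m -> G -> G -> int).
Local Notation FT := {ffun 'I_m -> G}.
Definition PF (x y : FT) : int := \prod_i A i (x i) (y i).

Hypothesis Apm : forall i x y, pmone (A i x y).

Lemma PF_pm1 x y : pmone (PF x y).
Proof.
rewrite /PF; apply: (big_ind pmone).
- by [].
- exact: pmoneM.
- by move=> i _; apply: Apm.
Qed.

Lemma PF_orth :
  (forall i x z, \sum_y A i x y * A i z y = #|G|%:R * (x == z)%:R) ->
  forall x z : FT, \sum_y PF x y * PF z y = #|FT|%:R * (x == z)%:R.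
Proof.
move=> HA x z.
transitivity (\sum_(y : FT) \prod_i (A i (x i) (y i) * A i (z i) (y i))).
  by apply: eq_bigr => y _; rewrite /PF -big_split.
rewrite -(bigA_distr_bigA (fun i t => A i (x i) t * A i (z i) t)).
under eq_bigr => i _ do rewrite HA.
rewrite big_split /= prodr_const card_ord card_ffun card_ord natrX.
congr (_ * _).
case: (boolP [forall i, x i == z i]) => [/forallP H | /forallPn [i Hi]].
  have -> : x = z by apply/ffunP => i; apply/eqP.
  by rewrite eqxx big1 // => i _; rewrite eqxx.
have -> : (x == z) = false.
  by apply/negbTE; apply: contra Hi => /eqP ->.
by rewrite (bigD1 i) //= (negPf Hi) mul0r.
Qed.

Lemma PF_sym : (forall i x y, A i x y = A i y x) -> forall x y, PF x y = PF y x.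
Proof. by move=> HA x y; apply: eq_bigr => i _; rewrite HA. Qed.

Lemma PF_diag : (forall i x y, A i x x = A i y y) -> forall x y, PF x x = PF y y.
Proof. by move=> HA x y; apply: eq_bigr => i _; rewrite (HA i (x i) (y i)). Qed.

Definition qat (q : FT * FT * FT * FT) (i : 'I_m) : G * G * G * G :=
  (q.1.1.1 i, q.1.1.2 i, q.1.2 i, q.2 i).

Lemma pr4_PF q y : pr4 PF q y = \prod_i pr4 (A i) (qat q i) (y i).
Proof. by rewrite /pr4 /PF -!big_split. Qed.

Lemma condF_PF q : condF PF q = [forall i, condF (A i) (qat q i)].
Proof.
apply/forallP/forallP => /= H.
  move=> i; apply/forallP => t; apply/forallP => t'.
  pose y0 := q.1.1.1.
  pose yt (t : G) := [ffun j => if j == i then t else y0 j].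
  have E : forall t, pr4 PF q (yt t) = pr4 (A i) (qat q i) t *
       \prod_(j | j != i) pr4 (A j) (qat q j) (y0 j).
    move=> t0; rewrite pr4_PF (bigD1 i) //= ffunE eqxx; congr (_ * _).
    by apply: eq_bigr => j /negPf Hj; rewrite ffunE Hj.
  have R0 : \prod_(j | j != i) pr4 (A j) (qat q j) (y0 j) != 0.
    apply: pmone_neq0; apply: (big_ind pmone).
    - by [].
    - exact: pmoneM.
    - by move=> j _; rewrite /pr4; do !apply: pmoneM; apply: Apm.
  have := forallP (H (yt t)) (yt t'); rewrite !E => /eqP /(mulIf R0) ->.
  by [].
move=> y; apply/forallP => y'; rewrite !pr4_PF; apply/eqP; apply: eq_bigr => i _.
by apply/eqP; have := forallP (H i) (y i) => /forallP; apply.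
Qed.

Lemma PF_cnt : cntF PF = (\prod_i cntF (A i))%N.
Proof.
rewrite /cntF (bigA_distr_bigA (fun i r => (condF (A i) r : nat))) /=.
pose zipf (q : FT * FT * FT * FT) : {ffun 'I_m -> G * G * G * G} := [ffun i => qat q i].
pose unz (f : {ffun 'I_m -> G * G * G * G}) : FT * FT * FT * FT :=
  ([ffun i => (f i).1.1.1], [ffun i => (f i).1.1.2], [ffun i => (f i).1.2], [ffun i => (f i).2]).
have bz : bijective zipf.
  exists unz.
    case=> [[[a b] c] d]; rewrite /unz /zipf /qat /=.
    by congr (_, _, _, _); apply/ffunP => i; rewrite !ffunE.
  move=> f; apply/ffunP => i; rewrite /unz /zipf /qat !ffunE /=.
  by case: (f i) => [[[a b] c] d].
rewrite (reindex zipf); last by apply: onW_bij.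
apply: eq_bigr => q _; rewrite condF_PF prod_bool.
by congr (nat_of_bool _); apply: eq_forallb => i; rewrite ffunE.
Qed.
End Prod.
Section Transfer.
Variables (T : finType) (n : nat) (e : 'I_n -> T).
Hypothesis eb : bijective e.
Hypothesis cardT : #|T| = n.
Variable F : T -> T -> int.
Definition Mx : 'M[int]_n := \matrix_(i, j) F (e i) (e j).

Lemma Mx_hadamard :
  (forall x y, pmone (F x y)) ->
  (forall x z, \sum_y F x y * F z y = #|T|%:R * (x == z)%:R) ->
  hadamard Mx.
Proof.
move=> Fpm Fo; split.
  by move=> i j; rewrite mxE; have := Fpm (e i) (e j) => /orP[]/eqP->; [left|right].
apply/matrixP => i j; rewrite !mxE.
transitivity (\sum_(k < n) F (e i) (e k) * F (e j) (e k)).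
  by apply: eq_bigr => k _; rewrite !mxE.
have -> : \sum_(k < n) F (e i) (e k) * F (e j) (e k) = \sum_(y : T) F (e i) y * F (e j) y.
  by rewrite (reindex e) //; exact: onW_bij _ eb.
by rewrite Fo (bij_eq eb) cardT mulr_natr.
Qed.

Lemma Mx_graphical :
  (forall x y, F x y = F y x) -> (forall x y, F x x = F y y) -> graphical Mx.
Proof.
move=> Fs Fd; split.
  by apply/matrixP => i j; rewrite !mxE Fs.
by move=> i j; rewrite !mxE (Fd (e i) (e j)).
Qed.

Lemma Mx_cnt : cnt_mx Mx = cntF F.
Proof.
rewrite /cnt_mx (cntF_ext (G := fun i j => 1 * 1 * F (e i) (e j))); last first.
  by move=> i j; rewrite mxE !mul1r.
by apply: (cnt_transform F (d := fun _ => 1) (e := fun _ => 1)) => // x; rewrite mulr1.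
Qed.
End Transfer.
Definition G := ('Z_4 * 'Z_4 * 'Z_4)%type.

Definition sgnb (b : bool) : int := if b then -1 else 1.
Lemma sgnbM a b : sgnb a * sgnb b = sgnb (a (+) b).
Proof. by case: a; case: b; rewrite /sgnb ?mulN1r ?opprK ?mul1r. Qed.
Lemma sgnb_eq a b : (sgnb a == sgnb b) = (a == b).
Proof. by case: a; case: b. Qed.
Lemma sgnb_pm a : pmone (sgnb a).
Proof. by case: a. Qed.

Section GroupDev.
Variable hb : G -> bool.
Definition hz (t : G) := sgnb (hb t).
Definition Fg (x y : G) : int := hz (x - y).
Definition cond3 (u v w : G) :=
  [forall t, hz t * hz (t + u) * hz (t + v) * hz (t + w) == hz 0 * hz u * hz v * hz w].
Definition cnt3 : nat := (\sum_u \sum_v \sum_w (cond3 u v w : nat))%N.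

Lemma sum4 (T : finType) (f : T * T * T * T -> nat) :
  (\sum_q f q = \sum_a \sum_b \sum_c \sum_d f (a, b, c, d))%N.
Proof.
rewrite pair_bigA pair_bigA pair_bigA; apply: eq_bigr.
by case=> [[[a b] c] d].
Qed.

Lemma sum_shift (f : G -> nat) (a : G) : (\sum_(b : G) f (b - a)%R = \sum_u f u)%N.
Proof.
by rewrite (reindex_inj (addIr a)) /=; apply: eq_bigr => u _; rewrite addrK.
Qed.

Lemma condF_Fg a b c d : condF Fg (a, b, c, d) = cond3 (b - a) (c - a) (d - a).
Proof.
set u := b - a; set v := c - a; set w := d - a.
pose Q t := hz t * hz (t + u) * hz (t + v) * hz (t + w).
have E : forall y, pr4 Fg (a, b, c, d) y = Q (a - y).
  move=> y; rewrite /pr4 /Fg /Q /u /v /w /=.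
  have S : forall z, a - y + (z - a) = z - y.
    by move=> z; rewrite addrC addrA subrK.
  by rewrite !S.
have Q0 : Q 0 = hz 0 * hz u * hz v * hz w by rewrite /Q !add0r.
apply/forallP/forallP => /= H.
  move=> t; have := forallP (H (a - t)) a.
  by rewrite !E subKr subrr Q0.
move=> y; apply/forallP => y'; rewrite !E.
have := H (a - y); have := H (a - y'); rewrite -/(Q (a - y)) -/(Q (a - y')) -Q0.
by move=> /eqP -> /eqP ->.
Qed.

Lemma card_G : #|{: G}| = 64%N.
Proof. by rewrite !card_prod !card_ord. Qed.

Lemma cnt_Fg : cntF Fg = (64 * cnt3)%N.
Proof.
rewrite /cntF sum4.
transitivity (\sum_(a : G) cnt3)%N; last by rewrite sum_nat_const card_G.
apply: eq_bigr => a _.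
under eq_bigr => b _ do under eq_bigr => c _ do under eq_bigr => d _ do rewrite condF_Fg.
rewrite (sum_shift (fun u => \sum_(c : G) \sum_(d : G) (cond3 u (c - a)%R (d - a)%R : nat))%N).
apply: eq_bigr => u _.
rewrite (sum_shift (fun v => \sum_(d : G) (cond3 u v (d - a)%R : nat))%N).
apply: eq_bigr => v _.
by rewrite (sum_shift (fun w => (cond3 u v w : nat))).
Qed.

Lemma Fg_pm x y : pmone (Fg x y).
Proof. exact: sgnb_pm. Qed.

Lemma Fg_orth :
  (forall g, \sum_t hz t * hz (t + g) = if g == 0 then 64 else 0) ->
  forall x z, \sum_y Fg x y * Fg z y = #|{: G}|%:R * (x == z)%:R.
Proof.
move=> Ha x z; rewrite /Fg.
rewrite (reindex_inj (can_inj (subKr x))) /=.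
under eq_bigr => t _ do rewrite subKr [- (x - t)]opprB.
under eq_bigr => t _ do rewrite [z + (t - x)]addrCA.
rewrite Ha card_G subr_eq0 eq_sym.
by case: (x == z).
Qed.

Lemma Fg_sym : (forall g, hb (- g) = hb g) -> forall x y, Fg x y = Fg y x.
Proof. by move=> Hs x y; rewrite /Fg /hz -opprB Hs. Qed.

Lemma Fg_diag x y : Fg x x = Fg y y.
Proof. by rewrite /Fg !subrr. Qed.
End GroupDev.
Definition allZ4 : seq 'Z_4 :=
  [:: @Ordinal 4 0 isT; @Ordinal 4 1 isT; @Ordinal 4 2 isT; @Ordinal 4 3 isT].
Definition allG : seq G :=
  [seq (ab, c) | ab <- [seq (a, b) | a <- allZ4, b <- allZ4], c <- allZ4].

Lemma allG_uniq : uniq allG.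
Proof. by vm_compute. Qed.

Lemma mem_allZ4 (a : 'Z_4) : a \in allZ4.
Proof. by case: a => [[|[|[|[|k]]]] Ha]. Qed.

Lemma mem_allG (x : G) : x \in allG.
Proof.
case: x => [[a b] c].
by case: a => [[|[|[|[|k]]]] Ha]; case: b => [[|[|[|[|k']]]] Hb];
  case: c => [[|[|[|[|k'']]]] Hc].
Qed.

Lemma sumG (R : Type) (idx : R) (op : Monoid.com_law idx) (f : G -> R) :
  \big[op/idx]_(x : G) f x = \big[op/idx]_(x <- allG) f x.
Proof.
apply: perm_big; apply: uniq_perm; first exact: index_enum_uniq.
  exact: allG_uniq.
by move=> x; rewrite mem_index_enum mem_allG.
Qed.

Lemma sumG_nat (f : G -> nat) : (\sum_(x : G) f x)%N = sumn [seq f x | x <- allG].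
Proof. by rewrite sumG sumnE big_map. Qed.

Lemma forallG (P : pred G) : [forall x, P x] = all P allG.
Proof.
apply/forallP/allP => H x.
  by move=> _; apply: H.
by apply: H; apply: mem_allG.
Qed.

Lemma big_foldr (T : Type) (s : seq T) (f : T -> int) :
  \sum_(x <- s) f x = foldr (fun x acc => f x + acc) 0 s.
Proof. by elim: s => [|x s IH]; rewrite ?big_nil // big_cons IH. Qed.

Definition gidx (t : G) : nat := (t.1.1 * 16 + t.1.2 * 4 + t.2)%N.
Definition hbL (l : seq bool) (t : G) : bool := nth false l (gidx t).
Definition rowL l (a : G) := [seq hbL l (t + a) | t <- allG].
Definition xorl (l1 l2 : seq bool) := [seq p.1 (+) p.2 | p <- zip l1 l2].

Definition cnt3L l :=
  let R := [seq rowL l a | a <- allG] in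
  let R0 := rowL l 0 in
  sumn [seq (let A := xorl R0 ru in
             sumn [seq (let B := xorl A rv in
                        let nB := map negb B in
                        sumn [seq (((rw == B) || (rw == nB)) : nat) | rw <- R])
                   | rv <- R]) | ru <- R].

Definition cnt3L' l :=
  sumn [seq sumn [seq sumn [seq (((rowL l w == xorl (xorl (rowL l 0) (rowL l u)) (rowL l v))
     || (rowL l w == map negb (xorl (xorl (rowL l 0) (rowL l u)) (rowL l v)))) : nat)
     | w <- allG] | v <- allG] | u <- allG].

Lemma cnt3L_E l : cnt3L l = cnt3L' l.
Proof.
by rewrite /cnt3L /cnt3L' -map_comp; congr sumn.
Qed.

Lemma xorl_map (f g : G -> bool) (s : seq G) :
  xorl (map f s) (map g s) = map (fun t => f t (+) g t) s.
Proof. by elim: s => [|x s IH] //=; rewrite /xorl /= -/(xorl _ _) IH. Qed.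

Lemma eq_map_all (f g : G -> bool) (s : seq G) :
  (map f s == map g s) = all (fun t => f t == g t) s.
Proof. by elim: s => [|x s IH] //=; rewrite eqseq_cons IH. Qed.

Lemma cond3_L l u v w :
  cond3 (hbL l) u v w =
  (rowL l w == xorl (xorl (rowL l 0) (rowL l u)) (rowL l v))
  || (rowL l w == map negb (xorl (xorl (rowL l 0) (rowL l u)) (rowL l v))).
Proof.
rewrite /rowL !xorl_map -map_comp !eq_map_all -!forallG.
rewrite /cond3 /hz.
pose X t := hbL l t (+) hbL l (t + u) (+) hbL l (t + v) (+) hbL l (t + w).
have E : forall t, sgnb (hbL l t) * sgnb (hbL l (t + u)) * sgnb (hbL l (t + v)) *
   sgnb (hbL l (t + w)) = sgnb (X t) by move=> t; rewrite !sgnbM.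
have E0 : sgnb (hbL l 0) * sgnb (hbL l u) * sgnb (hbL l v) * sgnb (hbL l w) = sgnb (X 0).
  by rewrite -E !add0r.
rewrite E0.
have A1 : forall t, (hbL l (t + w) == hbL l (t + 0) (+) hbL l (t + u) (+) hbL l (t + v))
   = (X t == false).
  move=> t; rewrite addr0 /X.
  by case: (hbL l (t + w)); case: (hbL l t (+) _ (+) _).
have A2 : forall t, (hbL l (t + w) == ~~ (hbL l (t + 0) (+) hbL l (t + u) (+) hbL l (t + v)))
   = (X t == true).
  move=> t; rewrite addr0 /X.
  by case: (hbL l (t + w)); case: (hbL l t (+) _ (+) _).
rewrite (eq_forallb A1) (eq_forallb A2).
under eq_forallb => t do rewrite E sgnb_eq.
case: (boolP [forall t, X t == X 0]) => [/forallP H | /forallPn [t Ht]].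
  case H0 : (X 0).
    by apply/esym/orP; right; apply/forallP => t; rewrite -H0 H.
  by apply/esym/orP; left; apply/forallP => t; rewrite -H0 H.
apply/esym/negbTE; rewrite negb_or; apply/andP; split; apply/negP => /forallP H;
  by move: Ht; rewrite (eqP (H t)) (eqP (H 0)).
Qed.
Definition hX : seq bool := [::true; false; false; false; false; false; true; true; true; false; false; false; false; true; true; false; false; false; false; false; false; false; false; true; true; false; true; false; true; true; true; false; false; true; true; true; false; true; true; false; false; true; true; true; false; false; true; true; false; false; false; false; true; false; true; true; true; false; true; false; false; true; false; false].
Definition hS : seq bool := [::true; true; true; true; true; false; true; false; false; false; false; false; true; false; true; false; false; false; true; true; true; true; false; false; false; false; true; true; false; false; true; true; false; true; false; true; true; true; true; true; true; false; true; false; true; true; true; true; false; true; true; false; false; true; true; false; false; true; true; false; true; false; false; true].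

Lemma cnt3_L l : cnt3 (hbL l) = cnt3L l.
Proof.
rewrite cnt3L_E /cnt3 /cnt3L' sumG_nat; apply: (congr1 sumn); apply: eq_map => u.
rewrite sumG_nat; apply: (congr1 sumn); apply: eq_map => v.
rewrite sumG_nat; apply: (congr1 sumn); apply: eq_map => w.
by rewrite cond3_L.
Qed.

Lemma cnt3X : cnt3 (hbL hX) = 832%N.
Proof. by rewrite cnt3_L; vm_compute. Qed.
Lemma cnt3S : cnt3 (hbL hS) = 4096%N.
Proof. by rewrite cnt3_L; vm_compute. Qed.

Definition autoL l (g : G) : int :=
  foldr (fun t acc => sgnb (hbL l t) * sgnb (hbL l (t + g)) + acc) 0 allG.
Definition autoOK l := all (fun g => autoL l g == (if g == 0 then 64 else 0)) allG.
Definition symOK l := all (fun g => hbL l (- g) == hbL l g) allG.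

Lemma autoOK_sum l : autoOK l ->
  forall g, \sum_t hz (hbL l) t * hz (hbL l) (t + g) = if g == 0 then 64 else 0.
Proof.
move=> /allP H g; rewrite sumG big_foldr; apply/eqP.
exact: (H g (mem_allG g)).
Qed.

Lemma symOK_eq l : symOK l -> forall g, hbL l (- g) = hbL l g.
Proof. by move=> /allP H g; apply/eqP; apply: H; apply: mem_allG. Qed.

Lemma autoX : autoOK hX. Proof. by vm_compute. Qed.
Lemma autoS : autoOK hS. Proof. by vm_compute. Qed.
Lemma symX : symOK hX. Proof. by vm_compute. Qed.
Lemma symS : symOK hS. Proof. by vm_compute. Qed.
Lemma prod_if (N k a b : nat) : (k <= N)%N ->
  (\prod_(i < N) (if (i < k)%N then a else b) = a ^ k * b ^ (N - k))%N.
Proof.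
elim: N k => [|N IH] k.
  by rewrite leqn0 => /eqP ->; rewrite big_ord0.
rewrite leq_eqVlt => /orP [/eqP -> | Hk].
  rewrite big_ord_recr /= ltnSn subnn expn0 muln1 expnS mulnC.
  congr (_ * _); have := IH N (leqnn N); rewrite subnn expn0 muln1 => <-.
  by apply: eq_bigr => i _; rewrite (ltn_trans (ltn_ord i) (ltnSn N)) ltn_ord.
rewrite ltnS in Hk.
rewrite big_ord_recr /= IH // ltnNge Hk /= subSn // expnS.
by rewrite -mulnA [(b * _)%N]mulnC.
Qed.

Lemma lt_pow (N a b k k' : nat) : (0 < a)%N -> (a < b)%N -> (k < k')%N -> (k' <= N)%N ->
  (a ^ k' * b ^ (N - k') < a ^ k * b ^ (N - k))%N.
Proof.
move=> a0 ab kk' k'N.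
have [d Ed] : exists d, k' = (k + d.+1)%N by exists (k' - k.+1)%N; lia.
have [e Ee] : exists e, N = (k' + e)%N by exists (N - k')%N; lia.
have -> : (N - k' = e)%N by lia.
have -> : (N - k = d.+1 + e)%N by lia.
rewrite Ed expnD expnD -mulnA ltn_pmul2l ?expn_gt0 ?a0 //.
rewrite ltn_pmul2r ?expn_gt0 ?(leq_trans a0 (ltnW ab)) //.
by rewrite ltn_exp2r.
Qed.
Lemma cardFT N : #|{: {ffun 'I_N -> G}}| = (4 ^ (3 * N))%N.
Proof. by rewrite card_ffun card_G card_ord expnM. Qed.

Definition eN N (i : 'I_(4 ^ (3 * N))) : {ffun 'I_N -> G} :=
  enum_val (cast_ord (esym (cardFT N)) i).

Lemma eN_bij N : bijective (@eN N).
Proof.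
exists (fun x => cast_ord (cardFT N) (enum_rank x)) => i; rewrite /eN.
  by rewrite enum_valK cast_ordKV.
by rewrite cast_ordK enum_rankK.
Qed.

Definition Ak (N k : nat) (i : 'I_N) : G -> G -> int :=
  if (i < k)%N then Fg (hbL hX) else Fg (hbL hS).

Definition MxN N k : 'M[int]_(4 ^ (3 * N)) := Mx (@eN N) (PF (Ak k)).

Lemma Ak_pm N k i x y : pmone (@Ak N k i x y).
Proof. by rewrite /Ak; case: ifP => _; apply: Fg_pm. Qed.

Lemma MxN_hadamard N k : hadamard (MxN N k).
Proof.
apply: Mx_hadamard; first exact: eN_bij; first exact: cardFT.
  by move=> x y; apply: PF_pm1 => i; apply: Ak_pm.
apply: PF_orth => i x z; rewrite /Ak; case: ifP => _; apply: Fg_orth; apply: autoOK_sum.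
  exact: autoX.
exact: autoS.
Qed.

Lemma MxN_graphical N k : graphical (MxN N k).
Proof.
apply: Mx_graphical.
  apply: PF_sym => i x y; rewrite /Ak; case: ifP => _; apply: Fg_sym; apply: symOK_eq.
    exact: symX.
  exact: symS.
by apply: PF_diag => i x y; rewrite /Ak; case: ifP => _; apply: Fg_diag.
Qed.

Lemma MxN_cnt N k : (k <= N)%N ->
  cnt_mx (MxN N k) = ((64 * 832) ^ k * (64 * 4096) ^ (N - k))%N.
Proof.
move=> kN; rewrite /MxN Mx_cnt; last exact: eN_bij.
rewrite PF_cnt; last by move=> i; apply: Ak_pm.
rewrite -prod_if //; apply: eq_bigr => i _; rewrite /Ak.
by case: ifP => _; rewrite cnt_Fg ?cnt3X ?cnt3S.
Qed.

Lemma MxN_neq N k k' : (k < k')%N -> (k' <= N)%N -> cnt_mx (MxN N k') <> cnt_mx (MxN N k).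
Proof.
move=> kk' k'N; rewrite !MxN_cnt //; last by apply: leq_trans (ltnW kk') k'N.
have a0 : (0 < 64 * 832)%N by rewrite muln_gt0.
have ab : (64 * 832 < 64 * 4096)%N by rewrite ltn_pmul2l.
move=> E; have := lt_pow a0 ab kk' k'N.
by rewrite E ltnn.
Qed.

Theorem corollary7p2 :
  forall N : nat, (0 < N)%N ->
  exists m : nat, (0 < m)%N /\
    exists Hs : seq 'M[int]_(4 ^ m),
      size Hs = N /\
      (forall H, H \in Hs -> hadamard H /\ graphical H) /\
      (forall i j, (i < N)%N -> (j < N)%N -> i <> j ->
         ~ hadamard_equiv (nth 0 Hs i) (nth 0 Hs j)).
Proof.
move=> N N0; exists (3 * N)%N; split; first by rewrite muln_gt0.
exists [seq MxN N k | k <- iota 0 N]; split; first by rewrite size_map size_iota.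
split.
  by move=> H /mapP [k _ ->]; split; [apply: MxN_hadamard | apply: MxN_graphical].
move=> i j iN jN ij.
rewrite !(nth_map 0%N) ?size_iota // !nth_iota // !add0n => /equiv_cnt E.
case: (ltngtP i j) => [lij | lji | eij]; last by [].
  by apply: (MxN_neq lij (ltnW jN)).
by apply: (MxN_neq lji (ltnW iN)); rewrite E.
Qed.
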